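(* For every positive integer $r$, the symplectic graph $Sp(2r)$ is not $3$-e.c.
   Context: A graph $G$ with vertex set $V$ is $n$-e.c. ($n$-existentially complete) if for every pair of disjoint subsets $A,B\subseteq V$ with $|A\cup B|=n$ (either of $A$, $B$ may be empty) there is a vertex $z\notin A\cup B$ adjacent to every vertex of $A$ and to no vertex of $B$. Let $\mathbb{F}_2$ be the binary field and $N$ the $2r\times 2r$ block-diagonal matrix over $\mathbb{F}_2$ with $r$ diagonal blocks equal to $\begin{pmatrix}0&1\\1&0\end{pmatrix}$. The symplectic graph $Sp(2r)$ has vertex set $\mathbb{F}_2^{2r}\setminus\{0\}$, with distinct vertices $x,y$ adjacent if and only if $x^T N y=1$. *)

(* Defs.v *)
From HB Require Import structures.
From mathcomp Require Import all_boot all_order all_algebra.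
Set Implicit Arguments. Unset Strict Implicit. Unset Printing Implicit Defensive.
Import GRing.Theory.
Local Open Scope ring_scope.

Definition is_nec (T : finType) (adj : rel T) (n : nat) : Prop :=
  forall A B : {set T}, [disjoint A & B] -> #|A :|: B| = n ->
    exists z : T, z \notin A :|: B /\
      (forall a, a \in A -> adj z a) /\ (forall b, b \in B -> ~~ adj z b).

(* The 2r x 2r block-diagonal matrix over F_2 with r blocks [[0,1],[1,0]]:
   entry (i,j) is 1 iff i and j lie in the same 2x2 block and i <> j. *)
Definition sympN (r : nat) : 'M['F_2]_(r.*2) :=
  \matrix_(i, j) (if ((i %/ 2 == j %/ 2)%N && (i != j)) then 1 else 0).

Definition sp_vertex (r : nat) := {v : 'rV['F_2]_(r.*2) | v != 0}.

Definition sp_adj (r : nat) : rel (sp_vertex r) :=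
  fun x y => (x != y) && ((val x *m sympN r *m (val y)^T) 0 0 == 1).

(* Main.v *)
Require Import Defs.
From HB Require Import structures.
From mathcomp Require Import all_boot all_order all_algebra.
Import GRing.Theory.
Local Open Scope ring_scope.

Theorem mainTheorem1 : forall r : nat, (0 < r)%N -> ~ is_nec (@sp_adj r) 3.
Proof.
move=> r r0 H.
have h0 : (0 < r.*2)%N by rewrite double_gt0.
have h1 : (1 < r.*2)%N by rewrite -addnn; case: (r) r0 => [|k] // _; rewrite addSn addnS.
pose i0 : 'I_(r.*2) := Ordinal h0.
pose i1 : 'I_(r.*2) := Ordinal h1.
pose u : 'rV['F_2]_(r.*2) := delta_mx 0 i0.
pose v : 'rV['F_2]_(r.*2) := delta_mx 0 i1.
have ui0 : u 0 i0 = 1 by rewrite mxE !eqxx.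
have ui1 : u 0 i1 = 0 by rewrite mxE.
have vi0 : v 0 i0 = 0 by rewrite mxE.
have vi1 : v 0 i1 = 1 by rewrite mxE !eqxx.
have un : u != 0 by apply/eqP => /matrixP/(_ 0 i0); rewrite ui0 mxE.
have vn : v != 0 by apply/eqP => /matrixP/(_ 0 i1); rewrite vi1 mxE.
have uvE : forall j, (u + v) 0 j = u 0 j + v 0 j by move=> j; rewrite [LHS]mxE.
have wn : u + v != 0 by apply/eqP => /matrixP/(_ 0 i0); rewrite uvE ui0 vi0 mxE.
pose x : sp_vertex r := exist _ u un.
pose y : sp_vertex r := exist _ v vn.
pose w : sp_vertex r := exist _ (u + v) wn.
have xy : x != y by apply/eqP => /(congr1 val)/matrixP/(_ 0 i0); rewrite /= ui0 vi0.
have xw : x != w by apply/eqP => /(congr1 val)/matrixP/(_ 0 i1); rewrite /= uvE ui1 vi1.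
have yw : y != w by apply/eqP => /(congr1 val)/matrixP/(_ 0 i0); rewrite /= uvE ui0 vi0.
have [||z [_ [Hz _]]] := H [set x; y; w] set0.
- by rewrite -setI_eq0 setI0.
- by rewrite setU0 setUC !cardsU1 cards1 !inE negb_or ![w == _]eq_sym xy xw yw.
have := Hz x; have := Hz y; have := Hz w.
rewrite !inE !eqxx !orbT /sp_adj /= => /(_ isT)/andP[_ /eqP Hw] /(_ isT)/andP[_ /eqP Hy] /(_ isT)/andP[_ /eqP Hx].
move: Hw; rewrite linearD /= mulmxDr mxE Hx Hy.
by [].
Qed.
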